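(* Let $\Xi$, $x_0=1-x_1-x_2$, $F_\beta$, $\beta_3$, $p_\beta$ be as in the context, let $\beta_1=2$, and for $\beta>\beta_3$ let $h_\beta=F_\beta(p_\beta,p_\beta)$ (which equals $F_\beta(1-2p_\beta,p_\beta)=F_\beta(p_\beta,1-2p_\beta)$). Then there exists $\beta_2\in(\beta_3,\beta_1)$ such that $h_\beta>0$ for $\beta\in(\beta_3,\beta_2)$, $h_{\beta_2}=0$, and $h_\beta<0$ for $\beta\in(\beta_2,\beta_1)$.
   Context: $\Xi=\{(x_1,x_2): x_1,x_2\ge0,\ x_1+x_2\le1\}$, $x_0=1-x_1-x_2$, and $F_\beta(\mathbf{x})=-\frac12|\sum_{k=0}^2x_k\mathbf{v}_k|^2+\frac1\beta\sum_{k=0}^2x_k\log(3x_k)$ with $\mathbf{v}_k=(\cos(2\pi k/3),\sin(2\pi k/3))$; note $F_\beta(1/3,1/3)=0$. Define $f_0(t)=\frac{2}{3(1-3t)}\log\frac{1-2t}{t}$ for $t\in(0,1/2)\setminus\{1/3\}$, $f_0(1/3)=2$; $m_0$ is the minimizer of $f_0$ and $\beta_3=f_0(m_0)$. For $\beta>\beta_3$, $p_\beta$ is the smaller of the two solutions of $f_0(t)=\beta$ in $(0,1/2)$ (so $p_\beta<m_0$). *)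

(* Defs.v *)
From Stdlib Require Import Reals ClassicalEpsilon.
Open Scope R_scope.

Definition vx (k : nat) : R := cos (2 * PI * INR k / 3).
Definition vy (k : nat) : R := sin (2 * PI * INR k / 3).

Definition Fb (beta x1 x2 : R) : R :=
  let x0 := 1 - x1 - x2 in
  let sx := x0 * vx 0 + x1 * vx 1 + x2 * vx 2 in
  let sy := x0 * vy 0 + x1 * vy 1 + x2 * vy 2 in
  - / 2 * (sx ^ 2 + sy ^ 2)
  + / beta * (x0 * ln (3 * x0) + x1 * ln (3 * x1) + x2 * ln (3 * x2)).

Definition f0 (t : R) : R :=
  if Req_EM_T t (1/3) then 2
  else 2 / (3 * (1 - 3 * t)) * ln ((1 - 2 * t) / t).

Definition is_min_f0 (m : R) : Prop :=
  0 < m < 1/2 /\ forall t, 0 < t < 1/2 -> f0 m <= f0 t.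
Definition m0 : R := epsilon (inhabits 0) is_min_f0.
Definition beta3 : R := f0 m0.
Definition beta1 : R := 2.

Definition is_pbeta (beta p : R) : Prop :=
  0 < p < 1/2 /\ f0 p = beta /\
  forall q, 0 < q < 1/2 -> f0 q = beta -> p <= q.
Definition pbeta (beta : R) : R := epsilon (inhabits 0) (is_pbeta beta).

Definition hb (beta : R) : R := Fb beta (pbeta beta) (pbeta beta).

(* Main.v *)
Require Import Defs.
From Stdlib Require Import Reals.
From Stdlib Require Import Lra Lia ClassicalEpsilon.
From Coquelicot Require Import Coquelicot.
Open Scope R_scope.

Definition f1 (t : R) : R := 2 / (3 * (1 - 3 * t)) * ln ((1 - 2 * t) / t).
Definition Mf (t : R) : R := 3 * ln ((1 - 2 * t) / t) - (1 - 3 * t) / (t * (1 - 2 * t)).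
Definition kf (t : R) : R := ln 3 + (2/3 - t) * ln (1 - 2 * t) + (1/3 + t) * ln t.

Lemma pos_q t : 0 < t < 1/2 -> 0 < (1 - 2*t) / t.
Proof. intros. apply Rdiv_lt_0_compat; lra. Qed.

Lemma D_f1 t : 0 < t < 1/2 -> t <> 1/3 -> is_derive f1 t (2/3 * Mf t / (1 - 3*t)^2).
Proof. intros H H'. pose proof (pos_q t H). unfold f1, Mf. auto_derive.
- repeat split; try lra.
- unfold Rminus, Rdiv in *. field. repeat split; lra.
Qed.

Lemma D_Mf t : 0 < t < 1/2 -> is_derive Mf t ((3*t-1)*(4*t-1)/(t^2*(1-2*t)^2)).
Proof. intros H. pose proof (pos_q t H). unfold Mf. auto_derive.
- repeat split; try lra. apply Rmult_integral_contrapositive; lra.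
- unfold Rminus, Rdiv in *. field. repeat split; lra.
Qed.

Lemma D_kf t : 0 < t < 1/2 -> is_derive kf t (- Mf t / 3).
Proof. intros H. unfold kf, Mf. auto_derive.
- repeat split; lra.
- rewrite ln_div by lra. unfold Rminus. field. lra.
Qed.

Lemma mvt_incr f df a b : a < b -> (forall c, a <= c <= b -> is_derive f c (df c)) ->
  (forall c, a < c < b -> 0 < df c) -> f a < f b.
Proof.
  intros Hab Hd Hp.
  destruct (MVT_cor2 f df a b Hab) as [c [Hc1 Hc2]].
  { intros c Hc. apply is_derive_Reals. now apply Hd. }
  specialize (Hp c Hc2). nra.
Qed.

Lemma mvt_decr f df a b : a < b -> (forall c, a <= c <= b -> is_derive f c (df c)) ->
  (forall c, a < c < b -> df c < 0) -> f b < f a.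
Proof.
  intros Hab Hd Hp.
  destruct (MVT_cor2 f df a b Hab) as [c [Hc1 Hc2]].
  { intros c Hc. apply is_derive_Reals. now apply Hd. }
  specialize (Hp c Hc2). nra.
Qed.

Lemma exp_n n x : exp (INR n * x) = exp x ^ n.
Proof. induction n. simpl. rewrite Rmult_0_l, exp_0. reflexivity.
rewrite S_INR, Rmult_plus_distr_r, exp_plus, IHn, Rmult_1_l. simpl. ring. Qed.

Lemma ln4 : ln 4 < 3/2.
Proof.
  assert (H : 35/32 < exp (3/32)) by (pose proof (exp_ineq1 (3/32)); lra).
  assert (H2 : (35/32)^16 <= exp (3/32) ^ 16) by (apply pow_incr; lra).
  assert (H3 : exp (3/2) = exp (3/32)^16) by (rewrite <- exp_n; f_equal; simpl; lra).
  rewrite <- (ln_exp (3/2)). apply ln_increasing. lra. rewrite H3.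
  simpl in H2 |- *. lra.
Qed.

Lemma M16 : Mf (1/6) < 0.
Proof. unfold Mf. replace ((1 - 2 * (1/6)) / (1/6)) with 4 by field.
  pose proof ln4. lra. Qed.

Lemma M13 : Mf (1/3) = 0.
Proof. unfold Mf. replace ((1 - 2 * (1/3)) / (1/3)) with 1 by field.
  rewrite ln_1. field. Qed.

Lemma dM_pos c : 0 < c < 1/4 -> 0 < (3*c-1)*(4*c-1)/(c^2*(1-2*c)^2).
Proof. intros. apply Rdiv_lt_0_compat. nra.
  apply Rmult_lt_0_compat; apply pow_lt; lra. Qed.
Lemma dM_neg c : 1/4 < c < 1/3 -> (3*c-1)*(4*c-1)/(c^2*(1-2*c)^2) < 0.
Proof. intros. unfold Rdiv. apply Rmult_neg_pos. nra.
  apply Rinv_0_lt_compat. apply Rmult_lt_0_compat; apply pow_lt; lra. Qed.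
Lemma dM_pos2 c : 1/3 < c < 1/2 -> 0 < (3*c-1)*(4*c-1)/(c^2*(1-2*c)^2).
Proof. intros. apply Rdiv_lt_0_compat. nra.
  apply Rmult_lt_0_compat; apply pow_lt; lra. Qed.

Lemma MI a b : 0 < a -> a < b -> b <= 1/4 -> Mf a < Mf b.
Proof. intros. apply (mvt_incr Mf (fun c => (3*c-1)*(4*c-1)/(c^2*(1-2*c)^2))); auto.
  - intros c Hc. apply D_Mf. lra.
  - intros c Hc. apply dM_pos. lra. Qed.
Lemma MD a b : 1/4 <= a -> a < b -> b <= 1/3 -> Mf b < Mf a.
Proof. intros. apply (mvt_decr Mf (fun c => (3*c-1)*(4*c-1)/(c^2*(1-2*c)^2))); auto.
  - intros c Hc. apply D_Mf. lra.
  - intros c Hc. apply dM_neg. lra. Qed.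
Lemma MI2 a b : 1/3 <= a -> a < b -> b < 1/2 -> Mf a < Mf b.
Proof. intros. apply (mvt_incr Mf (fun c => (3*c-1)*(4*c-1)/(c^2*(1-2*c)^2))); auto.
  - intros c Hc. apply D_Mf. lra.
  - intros c Hc. apply dM_pos2. lra. Qed.

Lemma cont_of_derive f x l : is_derive f x l -> continuity_pt f x.
Proof. intros H. apply is_derive_Reals in H.
  apply (derivable_continuous_pt f x (exist _ l H)). Qed.

Lemma root_ex : exists m, 1/6 < m < 1/4 /\ Mf m = 0.
Proof.
  assert (H14 : 0 < Mf (1/4)) by (pose proof (MD (1/4) (1/3)); rewrite M13 in H; lra).
  destruct (Ranalysis5.IVT_interv Mf (1/6) (1/4)) as [m [Hm1 Hm2]].
  - intros a Ha. eapply cont_of_derive. apply D_Mf. lra.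
  - lra.
  - apply M16.
  - exact H14.
  - exists m. split; auto. destruct Hm1 as [H1 H2].
    destruct H1 as [H1|H1]; [|subst; pose proof M16; lra].
    destruct H2 as [H2|H2]; [|subst; lra]. lra.
Qed.

Section WithM.
Variable m : R.
Hypothesis Hm : 1/6 < m < 1/4.
Hypothesis HMm : Mf m = 0.

Lemma Mneg t : 0 < t < m -> Mf t < 0.
Proof. intros. pose proof (MI t m). lra. Qed.
Lemma Mpos t : m < t < 1/3 -> 0 < Mf t.
Proof. intros. destruct (Rle_lt_dec t (1/4)).
  - pose proof (MI m t). lra.
  - pose proof (MD t (1/3)). rewrite M13 in H0. lra. Qed.

Lemma F_dec a b : 0 < a -> a < b -> b <= m -> f1 b < f1 a.
Proof. intros. apply (mvt_decr f1 (fun c => 2/3 * Mf c / (1 - 3*c)^2)); auto.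
  - intros c Hc. apply D_f1; lra.
  - intros c Hc. unfold Rdiv. apply Rmult_neg_pos.
    pose proof (Mneg c). lra. apply Rinv_0_lt_compat, pow_lt. lra. Qed.
Lemma F_inc a b : m <= a -> a < b -> b < 1/3 -> f1 a < f1 b.
Proof. intros. apply (mvt_incr f1 (fun c => 2/3 * Mf c / (1 - 3*c)^2)); auto.
  - intros c Hc. apply D_f1; lra.
  - intros c Hc. apply Rdiv_lt_0_compat.
    pose proof (Mpos c). lra. apply pow_lt. lra. Qed.
End WithM.

Definition gl (y : R) := ln y - 2 * (y - 1) / (y + 1).
Lemma gl_neg x : 0 < x < 1 -> gl x < 0.
Proof. intros. assert (gl 1 = 0) by (unfold gl; rewrite ln_1; field).
  assert (gl x < gl 1); [|lra].
  apply (mvt_incr gl (fun y => 1/y - 4/(y+1)^2)); try lra.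
  - intros c Hc. unfold gl. auto_derive. lra. field. lra.
  - intros c Hc. replace (1/c - 4/(c+1)^2) with ((c-1)^2/(c*(c+1)^2)) by (field; lra).
    apply Rdiv_lt_0_compat. nra. apply Rmult_lt_0_compat. lra. nra.
Qed.

Lemma F_gt2 t : 1/3 < t < 1/2 -> 2 < f1 t.
Proof. intros. pose proof (gl_neg ((1-2*t)/t)) as G.
  assert (0 < (1-2*t)/t < 1).
  { split. apply pos_q; lra. apply (Rmult_lt_reg_r t). lra. field_simplify; lra. }
  specialize (G H0). unfold gl in G.
  replace (2 * ((1 - 2 * t) / t - 1) / ((1 - 2 * t) / t + 1)) with (2*(1-3*t)/(1-t)) in G
    by (field; lra).
  unfold f1. set (L := ln ((1 - 2 * t) / t)) in *.
  assert (L < 2 * (1 - 3 * t) / (1 - t)) by lra.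
  assert (L * (1-t) < 2*(1-3*t)).
  { apply (Rmult_lt_reg_r (/(1-t))). apply Rinv_0_lt_compat; lra.
    replace (L * (1-t) * /(1-t)) with L by (field; lra). lra. }
  replace (2 / (3 * (1 - 3 * t)) * L) with (2 * L / (3 * (1 - 3 * t))) by (field; lra).
  apply (Rmult_lt_reg_r (-(3*(1-3*t)))). lra.
  replace (2 * L / (3 * (1 - 3 * t)) * - (3 * (1 - 3 * t))) with (- 2 * L) by (field; lra).
  nra.
Qed.

Lemma f1_pos t : 0 < t < 1/3 -> 0 < f1 t.
Proof. intros. unfold f1. apply Rmult_lt_0_compat.
  apply Rdiv_lt_0_compat; lra. rewrite <- ln_1. apply ln_increasing. lra.
  apply (Rmult_lt_reg_r t). lra. field_simplify; lra. Qed.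

Lemma f0_f1 t : t <> 1/3 -> f0 t = f1 t.
Proof. intros. unfold f0, f1. destruct (Req_EM_T t (1/3)); [contradiction|reflexivity]. Qed.

Lemma f1_16 : f1 (1/6) < 2.
Proof. unfold f1. replace ((1 - 2 * (1/6)) / (1/6)) with 4 by field.
  pose proof ln4. lra. Qed.

Lemma K16 : kf (1/6) = 0.
Proof. unfold kf. replace (1 - 2 * (1/6)) with (2/3) by field.
  replace (2/3 - 1/6) with (1/2) by field. replace (1/3 + 1/6) with (1/2) by field.
  assert (ln (2/3) + ln (1/6) = - 2 * ln 3).
  { rewrite <- ln_mult by lra. replace (2/3 * (1/6)) with (/ (3*3)) by field.
    rewrite ln_Rinv by lra. rewrite ln_mult by lra. ring. }
  lra. Qed.

Lemma vals : vx 0 = 1 /\ vx 1 = -1/2 /\ vx 2 = -1/2 /\ vy 0 = 0 /\ vy 1 + vy 2 = 0.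
Proof. unfold vx, vy. simpl INR.
  replace (2 * PI * 0 / 3) with 0 by field.
  replace (2 * PI * 1 / 3) with (- (PI/3) + PI) by field.
  replace (2 * PI * (1+1) / 3) with (PI/3 + PI) by field.
  rewrite !neg_cos, !neg_sin, cos_neg, sin_neg, cos_0, sin_0, cos_PI3.
  repeat split; lra. Qed.

Lemma FbK p : 0 < p < 1/3 -> f1 p * Fb (f1 p) p p = kf p.
Proof. intros. pose proof (f1_pos p H). destruct vals as [A [B [C [D E]]]].
  unfold Fb. rewrite A, B, C, D.
  replace (p * vy 2) with (- (p * vy 1)) by (assert (vy 2 = - vy 1) by lra; rewrite H1; ring).
  unfold kf. rewrite !ln_mult by lra.
  assert (f1 p = 2 / (3 * (1 - 3 * p)) * (ln (1 - 2*p) - ln p)) by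
    (unfold f1; rewrite ln_div by lra; reflexivity).
  replace (1 - p - p) with (1 - 2*p) by ring.
  rewrite Rmult_plus_distr_l, <- (Rmult_assoc (f1 p) (/ f1 p)), Rinv_r by lra.
  rewrite Rmult_1_l, H1. field. lra.
Qed.

Lemma K_inc m a b : 1/6 < m < 1/4 -> Mf m = 0 -> 0 < a -> a < b -> b <= m -> kf a < kf b.
Proof. intros. apply (mvt_incr kf (fun c => - Mf c / 3)); auto.
  - intros c Hc. apply D_kf; lra.
  - intros c Hc. pose proof (Mneg m H H0 c). lra. Qed.

Theorem lemma4p3 :
  exists beta2 : R, beta3 < beta2 < beta1 /\
    (forall beta, beta3 < beta < beta2 -> hb beta > 0) /\
    hb beta2 = 0 /\
    (forall beta, beta2 < beta < beta1 -> hb beta < 0).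
Proof.
  destruct root_ex as [m [Hm HMm]].
  assert (Hf1m : f1 m < f1 (1/6)) by (apply (F_dec m Hm HMm); lra).
  pose proof f1_16 as H16.
  assert (Smin : forall t, 0 < t < 1/2 -> t <> m -> f1 m < f0 t).
  { intros t Ht Htm. destruct (Req_EM_T t (1/3)) as [E|E].
    - subst. unfold f0. destruct (Req_EM_T (1/3) (1/3)); [lra|congruence].
    - rewrite f0_f1 by auto. destruct (Rtotal_order t m) as [L|[L|L]].
      + apply (F_dec m Hm HMm); lra.
      + contradiction.
      + destruct (Rtotal_order t (1/3)) as [L2|[L2|L2]].
        * apply (F_inc m Hm HMm); lra.
        * contradiction.
        * pose proof (F_gt2 t). lra. }
  assert (Hmin : is_min_f0 m).
  { split. lra. intros t Ht. rewrite f0_f1 by lra.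
    destruct (Req_EM_T t m) as [e|n]. rewrite e, f0_f1 by lra; lra. pose proof (Smin t Ht n). lra. }
  assert (Hm0 : m0 = m).
  { assert (is_min_f0 m0) by (unfold m0; apply epsilon_spec; exists m; exact Hmin).
    destruct H as [H1 H2]. destruct (Req_EM_T m0 m) as [E|E]; auto.
    pose proof (Smin m0 H1 E). pose proof (H2 m). specialize (H0 ltac:(lra)). rewrite (f0_f1 m) in H0 by lra.
    lra. }
  assert (Hb3 : beta3 = f1 m) by (unfold beta3; rewrite Hm0; apply f0_f1; lra).
  assert (PB : forall beta, f1 m < beta < 2 -> 0 < pbeta beta < m /\ f1 (pbeta beta) = beta).
  { intros beta Hb.
    set (ts := / (2 + exp 3)).
    assert (He : 1 + 3 < exp 3) by (apply exp_ineq1; lra).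
    assert (Hts : 0 < ts < 1/6).
    { unfold ts. split. apply Rinv_0_lt_compat; lra.
      apply (Rmult_lt_reg_r (2 + exp 3)). lra. rewrite Rinv_l by lra. lra. }
    assert (Fts : 2 < f1 ts).
    { unfold f1. replace ((1 - 2 * ts) / ts) with (exp 3)
        by (unfold ts; field; lra). rewrite ln_exp.
      replace (2 / (3 * (1 - 3 * ts)) * 3) with (2 / (1 - 3*ts)) by (field; lra).
      apply (Rmult_lt_reg_r (1 - 3*ts)). lra.
      replace (2 / (1 - 3 * ts) * (1 - 3 * ts)) with 2 by (field; lra). nra. }
    destruct (Ranalysis5.IVT_interv (fun t => beta - f1 t) ts m) as [z [Hz1 Hz2]].
    - intros a Ha. apply continuity_pt_minus. apply continuity_pt_const. intros ? ?; auto.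
      eapply cont_of_derive. apply D_f1; lra.
    - lra.
    - lra.
    - lra.
    - assert (Hz : ts < z < m).
      { destruct Hz1 as [[A|A] [B|B]]; subst; lra. }
      assert (Pz : is_pbeta beta z).
      { split. lra. split. rewrite f0_f1 by lra. lra.
        intros q Hq Hfq. destruct (Rle_lt_dec z q); auto.
        rewrite f0_f1 in Hfq by lra.
        pose proof (F_dec m Hm HMm q z). lra. }
      assert (Pp : is_pbeta beta (pbeta beta)) by (unfold pbeta; apply epsilon_spec; exists z; exact Pz).
      destruct Pp as [P1 [P2 P3]]. specialize (P3 z ltac:(lra) ltac:(rewrite f0_f1 by lra; lra)).
      split. lra. rewrite <- f0_f1 by lra. exact P2. }
  assert (HB : forall beta, f1 m < beta < 2 -> beta * hb beta = kf (pbeta beta)).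
  { intros beta Hb. destruct (PB beta Hb) as [P1 P2]. unfold hb.
    rewrite <- P2 at 1. rewrite <- (FbK (pbeta beta)) by lra. rewrite P2. reflexivity. }
  assert (Hpos : 0 < f1 m) by (apply f1_pos; lra).
  exists (f1 (1/6)). unfold beta1. rewrite Hb3. split; [lra|]. split; [|split].
  - intros beta Hb. destruct (PB beta ltac:(lra)) as [P1 P2].
    assert (1/6 < pbeta beta).
    { destruct (Rle_lt_dec (pbeta beta) (1/6)) as [L|L]; auto.
      destruct L as [L|L]. pose proof (F_dec m Hm HMm (pbeta beta) (1/6)). lra.
      rewrite L in P2. lra. }
    pose proof (K_inc m (1/6) (pbeta beta) Hm HMm). rewrite K16 in H0.
    specialize (H0 ltac:(lra) H ltac:(lra)). rewrite <- HB in H0 by lra.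
    apply Rlt_gt. apply (Rmult_lt_reg_l beta). lra. lra.
  - destruct (PB (f1 (1/6)) ltac:(lra)) as [P1 P2].
    assert (pbeta (f1 (1/6)) = 1/6).
    { destruct (Rtotal_order (pbeta (f1 (1/6))) (1/6)) as [L|[L|L]]; auto.
      pose proof (F_dec m Hm HMm (pbeta (f1 (1/6))) (1/6)). lra.
      pose proof (F_dec m Hm HMm (1/6) (pbeta (f1 (1/6)))). lra. }
    pose proof (HB (f1 (1/6)) ltac:(lra)). rewrite H, K16 in H0.
    apply Rmult_integral in H0. destruct H0; lra.
  - intros beta Hb. destruct (PB beta ltac:(lra)) as [P1 P2].
    assert (pbeta beta < 1/6).
    { destruct (Rle_lt_dec (1/6) (pbeta beta)) as [L|L]; auto.
      destruct L as [L|L]. pose proof (F_dec m Hm HMm (1/6) (pbeta beta)). lra.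
      rewrite <- L in P2. lra. }
    pose proof (K_inc m (pbeta beta) (1/6) Hm HMm). rewrite K16 in H0.
    specialize (H0 ltac:(lra) H ltac:(lra)). rewrite <- HB in H0 by lra.
    apply (Rmult_lt_reg_l beta). lra. lra.
Qed.
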